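(* Let $n\ge 6$ be even, and let $d_*=(\epsilon_1,\dots,\epsilon_{n-1},h)$ be the extended difference row of a Latin row of length $n$ with inner distance $\frac n2-1$, and suppose $h\ge 0$. Then one of the following holds. (0) $h=0$, and $d_*$ is a rotation of $(1^{\frac n2-1},0,(-1)^{\frac n2-1},0)$ or $d_*=\pm(1,\dots,1)$. (Type 1) $h>0$ and $\epsilon_1,\dots,\epsilon_{n-1}\in\{0,-1\}$; then $h=\frac n2-1$ and $(\epsilon_1,\dots,\epsilon_{n-1})=(0,-1,0,-1,\dots,-1,0)$ alternates. Or $h>0$ and $\epsilon_1,\dots,\epsilon_{n-1}\in\{0,1\}$; then \[d_*=(1^{\frac n2-h+1},\underbrace{0,1,0,1,\dots,0,1}_{h-1\text{ pairs }(0,1)},1^{\frac n2-h},h),\] where $h$ is odd with $h\in[1,\frac n2-1]$ if $n\equiv 0\pmod 4$, and $h$ is even with $h\in[1,\frac n2-1]$ if $n\equiv 2\pmod 4$. (Type 2) $h>0$ and each of $0,1,-1$ occurs among $\epsilon_1,\dots,\epsilon_{n-1}$; then \[d_*=(1^{m},0,(-1)^{m+1},\underbrace{0,-1,\dots,0,-1}_{h-1\text{ pairs }(0,-1)},(-1)^{\frac n2-h-m-1},0,1^{\frac n2-h-m-1},h)\] for some $h\in[1,\frac n2-2]$ and some $m\in[0,\frac n2-1-h]$.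
   Context: Symbols are $[1,n]$. For $a,b\in[1,n]$, $\mathrm{dist}(a,b)$ is the minimum of the residues of $a-b$ and $b-a$ modulo $n$ (in $[0,n-1]$). A Latin row of length $n$ is a permutation $(s_1,\dots,s_n)$ of $[1,n]$; its inner distance is $\min_{1\le j\le n-1}\mathrm{dist}(s_j,s_{j+1})$. Its extended difference row is $d_*=(\epsilon_1,\dots,\epsilon_{n-1},h)$ where, with $h_j\in[0,n-1]$, $h_j\equiv s_{j+1}-s_j\pmod n$ for $1\le j\le n-1$ and $h_n\equiv s_1-s_n\pmod n$, one sets $\epsilon_j=h_j-\frac n2$ and $h=h_n-\frac n2$ (integers). Notation $x^{a}$ inside a vector denotes $a$ consecutive entries equal to $x$ (none if $a=0$). Writing $\epsilon_n=h$, the rotation by 1 of $d_*$ is $(\epsilon_n,\epsilon_1,\dots,\epsilon_{n-1})$, and rotations are iterates of this shift. *)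

(* Defs.v *)
From mathcomp Require Import all_boot all_order all_algebra.
Set Implicit Arguments. Unset Strict Implicit. Unset Printing Implicit Defensive.
Import Order.TTheory GRing.Theory Num.Theory.
Local Open Scope ring_scope.

(* A Latin row of length n: a sequence (s_1,...,s_n) (stored 0-indexed as
   s = [:: s_1; ...; s_n]) that is a permutation of [1,n]. *)
Definition latin_row (n : nat) (s : seq nat) : bool := perm_eq s (iota 1 n).

Definition cdist (n a b : nat) : nat :=
  minn `|((a%:Z - b%:Z) %% n%:Z)%Z|%N `|((b%:Z - a%:Z) %% n%:Z)%Z|%N.

Definition inner_distance (n : nat) (s : seq nat) : nat :=
  \big[minn/n]_(j < n.-1) cdist n (nth 0%N s j) (nth 0%N s j.+1).

Definition hdiff (n : nat) (s : seq nat) (j : nat) : int :=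
  (((nth 0%N s ((j.+1) %% n)%N)%:Z - (nth 0%N s j)%:Z) %% n%:Z)%Z.

Definition ext_diff_row (n : nat) (s : seq nat) : seq int :=
  [seq hdiff n s j - (n./2)%:Z | j <- iota 0 n].

Definition ext_h (n : nat) (s : seq nat) : int := nth 0 (ext_diff_row n s) n.-1.
Definition ext_eps (n : nat) (s : seq nat) : seq int := take n.-1 (ext_diff_row n s).

Definition rot1 (d : seq int) : seq int := rotr 1 d.
Definition is_rotation_of (d e : seq int) : Prop := exists k : nat, d = iter k rot1 e.

Definition pw (a : nat) (x : int) : seq int := nseq a x.
Definition pairs (a : nat) (x y : int) : seq int := flatten (nseq a [:: x; y]).

(* Main.v *)
Require Import Defs.
From mathcomp Require Import all_boot all_order all_algebra.
From mathcomp Require Import zify.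
Import Order.TTheory GRing.Theory Num.Theory.
Set Implicit Arguments. Unset Strict Implicit. Unset Printing Implicit Defensive.
Local Open Scope ring_scope.

Lemma cong0 (a c m : int) : 0 < m -> a = c * m -> -m < a -> a < m -> a = 0.
Proof.
move=> m0 ->.
case: (ltrgt0P c) => [c0|c0|->]; last by rewrite mul0r.
- have : 1 <= c by lia.
  move=> c1 _ H; have : m <= c * m by rewrite ler_pMl. lia.
- have : c <= -1 by lia.
  move=> c1 H _; have : c * m <= - m. rewrite -mulN1r ler_pM2r //. lia.
Qed.

Lemma absz_test (z : int) : 0 <= z -> (`|z|%N)%:Z = z.
Proof. move=> H; lia. Qed.

Definition stepok (L : nat) (P : nat -> int) :=
  forall j, (j.+1 < L)%N -> P j - 1 <= P j.+1 /\ P j.+1 <= P j + 1.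

Lemma ivt_up L P i j v : stepok L P -> (i <= j)%N -> (j < L)%N ->
  P i <= v -> v <= P j -> exists t, [/\ (i <= t)%N, (t <= j)%N & P t = v].
Proof.
move=> st; elim: j => [|j IH] hij hjL Hi Hj.
  have i0 : i = 0%N by lia.
  subst i; exists 0%N; split => //; lia.
case: (leqP i j) => hij'.
  case: (lerP v (P j)) => hv.
    have [t [h1 h2 h3]] := IH hij' (ltnW hjL) Hi hv.
    by exists t; split => //; lia.
  have := st j hjL; move=> [s1 s2].
  exists j.+1; split => //; lia.
have ei : i = j.+1 by lia.
subst i; exists j.+1; split => //; lia.
Qed.

Lemma ivt_dn L P i j v : stepok L P -> (i <= j)%N -> (j < L)%N ->
  v <= P i -> P j <= v -> exists t, [/\ (i <= t)%N, (t <= j)%N & P t = v].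
Proof.
move=> st hij hjL H1 H2.
have st' : stepok L (fun x => - P x).
  move=> x hx; have [a b] := st x hx; split; lia.
have [t [h1 h2 h3]] := @ivt_up L (fun x => - P x) i j (- v) st' hij hjL ltac:(lia) ltac:(lia).
exists t; split => //; lia.
Qed.

Lemma ivt L P i j v : stepok L P -> (i <= j)%N -> (j < L)%N ->
  (P i <= v <= P j \/ P j <= v <= P i) -> exists t, [/\ (i <= t)%N, (t <= j)%N & P t = v].
Proof.
move=> st hij hjL [/andP[a b]|/andP[a b]].
  exact: (ivt_up st hij hjL a b).
exact: (ivt_dn st hij hjL b a).
Qed.

Lemma ivt2 L P i j v : stepok L P -> (i < L)%N -> (j < L)%N ->
  (P i <= v <= P j \/ P j <= v <= P i) -> exists t, (t < L)%N /\ P t = v.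
Proof.
move=> st hi hj H.
case: (leqP i j) => hij.
  have [t [? ? ?]] := ivt st hij hj H; exists t; split => //; lia.
have [t [? ? ?]] := ivt st (ltnW hij) hi ltac:(case: H => H; [right|left]; exact H).
exists t; split => //; lia.
Qed.

Lemma argmax (f : nat -> int) L : (0 < L)%N -> exists a, (a < L)%N /\ forall j, (j < L)%N -> f j <= f a.
Proof.
elim: L => [//|L IH] _.
case: L IH => [|L] IH.
  by exists 0%N; split => // j; rewrite ltnS leqn0 => /eqP ->.
have [a [ha Ha]] := IH isT.
case: (lerP (f L.+1) (f a)) => h.
  exists a; split; first lia.
  move=> j hj; case: (ltnP j L.+1) => hj'; first exact: Ha.
  by have -> : j = L.+1 by lia.
exists L.+1; split => // j hj.
case: (ltnP j L.+1) => hj'; last by have -> : j = L.+1 by lia.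
by have := Ha j hj'; lia.
Qed.

Lemma argmin (f : nat -> int) L : (0 < L)%N -> exists a, (a < L)%N /\ forall j, (j < L)%N -> f a <= f j.
Proof.
move=> hL; have [a [ha Ha]] := argmax (fun x => - f x) hL.
exists a; split => // j hj; have := Ha j hj; lia.
Qed.

Record good (k : nat) (P : nat -> int) : Prop := Good {
  g_k : (3 <= k)%N;
  g_P0 : P 0%N = 0;
  g_step : stepok k.*2 P;
  g_F1 : forall i j, (i < j)%N -> (j < k.*2)%N -> P i = P j -> odd (j - i);
  g_F2 : forall i j, (i < j)%N -> (j < k.*2)%N -> odd (j - i) ->
          P j - P i <> k%:Z /\ P j - P i <> - k%:Z;
  g_surj : forall (v : int) (b : bool),
     (forall j, (j < k.*2)%N -> v - k%:Z < P j /\ P j < v + k%:Z) ->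
     exists j, [/\ (j < k.*2)%N, P j = v & odd j = b]
}.

Lemma F1' k P : good k P -> forall i j, (i < k.*2)%N -> (j < k.*2)%N -> i <> j ->
  P i = P j -> odd i = ~~ odd j.
Proof.
move=> G i j hi hj nij e.
case: (ltnP i j) => h.
  have := g_F1 G h hj e; rewrite oddB ?(ltnW h) //.
  by case: (odd i); case: (odd j).
have h' : (j < i)%N by lia.
have := g_F1 G h' hi (esym e); rewrite oddB ?(ltnW h') //.
by case: (odd i); case: (odd j).
Qed.

Lemma F2' k P : good k P -> forall i j, (i < k.*2)%N -> (j < k.*2)%N ->
  (P j - P i = k%:Z \/ P j - P i = - k%:Z) -> odd i = odd j.
Proof.
move=> G i j hi hj e.
case: (ltngtP i j) => h; last by rewrite h.
  case Ho: (odd (j - i)).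
    have := g_F2 G h hj Ho; case: e => e [] //.
  move: Ho; rewrite oddB ?(ltnW h) //.
  by case: (odd i); case: (odd j).
case Ho: (odd (i - j)).
  have := g_F2 G h hi Ho; case: e => e []; lia.
move: Ho; rewrite oddB ?(ltnW h) //.
by case: (odd i); case: (odd j).
Qed.

Lemma notriple k P : good k P -> forall i j l, (i < j)%N -> (j < l)%N -> (l < k.*2)%N ->
  P i = P j -> P j = P l -> False.
Proof.
move=> G i j l hij hjl hl e1 e2.
have a := F1' G (i := i) (j := j) ltac:(lia) ltac:(lia) ltac:(lia) e1.
have b := F1' G (i := j) (j := l) ltac:(lia) ltac:(lia) ltac:(lia) e2.
have c := F1' G (i := i) (j := l) ltac:(lia) ltac:(lia) ltac:(lia) ltac:(congruence).
move: a b c; by case: (odd i); case: (odd j); case: (odd l).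
Qed.

Lemma once k P : good k P -> forall b c, (b < k.*2)%N -> (c < k.*2)%N ->
  (P c - P b = k%:Z \/ P c - P b = - k%:Z) ->
  forall t, (t < k.*2)%N -> P t = P b -> t = b.
Proof.
move=> G b c hb hc e t ht et.
apply/eqP; apply: contraT => /eqP ntb.
have p1 := F2' G hb hc e.
have p2 := F2' G ht hc ltac:(rewrite et; exact e).
have p3 := F1' G ht hb ntb et.
move: p1 p2 p3; by case: (odd t); case: (odd b); case: (odd c).
Qed.

Lemma Pbound k P : good k P -> forall j, (j < k.*2)%N -> - (j%:Z) <= P j <= j%:Z.
Proof.
move=> G; elim => [|j IH] hj; first by rewrite (g_P0 G).
have := IH (ltnW hj); have [a b] := g_step G hj; lia.
Qed.

Lemma first_idx (p : pred nat) a : p a -> exists a', [/\ p a', (a' <= a)%N & forall j, (j < a')%N -> ~~ p j].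
Proof.
move=> pa.
have ex : exists n, p n by exists a.
case: (ex_minnP ex) => a' pa' Hmin.
exists a'; split => //; first exact: Hmin.
move=> j hj; apply/negP => pj; have := Hmin j pj; lia.
Qed.

Definition D (f : nat -> int) (m : nat) : seq int := mkseq (fun i => f i.+1 - f i) m.

Lemma D_cat f a b : D f (a + b) = D f a ++ D (fun i => f (a + i)%N) b.
Proof.
rewrite /D /mkseq iotaD map_cat add0n; congr (_ ++ _).
by rewrite -[a in iota a]addn0 iotaDl -map_comp; apply: eq_map => i /=; rewrite addnS.
Qed.

Lemma D_pw f a x : (forall i, (i < a)%N -> f i.+1 - f i = x) -> D f a = pw a x.
Proof.
move=> H; apply: (@eq_from_nth _ 0); first by rewrite size_mkseq size_nseq.
move=> i; rewrite size_mkseq => hi; rewrite nth_mkseq // nth_nseq hi; exact: H.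
Qed.

Lemma D_shift f c m : D (fun i => f i + c) m = D f m.
Proof. apply: eq_mkseq => i /=; lia. Qed.

Lemma D1 f : D f 1 = [:: f 1%N - f 0%N].
Proof. by []. Qed.

Lemma D_pairs c f x y : (forall i, (i < c)%N -> f (2*i).+1 - f (2*i)%N = x /\ f (2*i).+2 - f (2*i).+1 = y) ->
   D f (2*c) = pairs c x y.
Proof.
elim: c f => [|c IH] f H; first by [].
have -> : (2 * c.+1 = 2 + 2 * c)%N by lia.
rewrite D_cat IH.
  have [a b] := H 0%N isT; rewrite /D /mkseq /= a b //.
move=> i hi; have [a b] := H i.+1 ltac:(lia).
have -> : (2 + (2 * i).+1 = (2 * i.+1).+1)%N by lia.
have -> : (2 + (2 * i) = (2 * i.+1))%N by lia.
have -> : (2 + (2 * i).+2 = (2 * i.+1).+2)%N by lia.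
by split.
Qed.

Lemma pairsS c x y : pairs c.+1 x y = x :: y :: pairs c x y.
Proof. by []. Qed.

Lemma notriple_gen (Q : nat -> int) L :
  (forall i j, (i < L)%N -> (j < L)%N -> i <> j -> Q i = Q j -> odd i = ~~ odd j) ->
  forall i j l, (i < j)%N -> (j < l)%N -> (l < L)%N -> Q i = Q j -> Q j = Q l -> False.
Proof.
move=> F i j l hij hjl hl e1 e2.
have a := F i j ltac:(lia) ltac:(lia) ltac:(lia) e1.
have b := F j l ltac:(lia) ltac:(lia) ltac:(lia) e2.
have c := F i l ltac:(lia) ltac:(lia) ltac:(lia) ltac:(congruence).
move: a b c; by case: (odd i); case: (odd j); case: (odd l).
Qed.

Lemma oddSS i : odd i.+2 = odd i.
Proof. by rewrite /= negbK. Qed.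

Lemma subclaim L : forall Q : nat -> int, (1 <= L)%N -> Q 0%N = 0 -> stepok (L.*2) Q ->
 (forall i, (i < L.*2)%N -> 1 - L%:Z <= Q i /\ Q i <= 0) ->
 (forall i j, (i < L.*2)%N -> (j < L.*2)%N -> i <> j -> Q i = Q j -> odd i = ~~ odd j) ->
 (forall (v : int) (b:bool), 1 - L%:Z <= v -> v <= 0 -> exists t, [/\ (t < L.*2)%N, Q t = v & odd t = b]) ->
 exists r u, [/\ (r + u = L - 1)%N,
   D Q (L.*2 - 1) = pairs r 0 (-1) ++ pw u (-1) ++ [:: 0] ++ pw u 1 &
   Q (L.*2 - 1)%N = - r%:Z].
Proof.
elim: L => [//|L IH] Q hL Q0 st rng F tw.
case: L IH hL st rng F tw => [|L] IH hL st rng F tw.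
  have q1 : Q 1%N = 0 by have := rng 1%N isT; lia.
  exists 0%N, 0%N; split => //.
  by rewrite /= D1 q1 Q0.
have NT := notriple_gen F.
have [s1 s2] := st 0%N ltac:(lia).
have [r1 r1'] := rng 1%N ltac:(lia).
have : Q 1%N = 0 \/ Q 1%N = -1 by lia.
case => q1.
-
  have [s3 s4] := st 1%N ltac:(lia).
  have [r2 r2'] := rng 2%N ltac:(lia).
  have q2 : Q 2%N = -1.
    have : Q 2%N <> 0.
      move=> e; have := F 0%N 2%N ltac:(lia) ltac:(lia) ltac:(lia) ltac:(congruence); done.
    lia.
  pose Q' := fun i => Q i.+2 + 1.
  have [r [u [ru HD HQ]]] : exists r u, [/\ (r + u = L.+1 - 1)%N,
     D Q' (L.+1.*2 - 1) = pairs r 0 (-1) ++ pw u (-1) ++ [:: 0] ++ pw u 1 &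
     Q' (L.+1.*2 - 1)%N = - r%:Z].
    apply: IH => //.
    - by rewrite /Q' q2.
    - move=> j hj; have := st j.+2 ltac:(lia); rewrite /Q'; lia.
    - move=> i hi; have [a b] := rng i.+2 ltac:(lia); rewrite /Q'.
      have : Q i.+2 <> 0.
        move=> e.
        have c1 := F 0%N i.+2 ltac:(lia) ltac:(lia) ltac:(lia) ltac:(congruence).
        have c2 := F 1%N i.+2 ltac:(lia) ltac:(lia) ltac:(lia) ltac:(congruence).
        move: c1 c2; rewrite oddSS /=; by case: (odd i).
      lia.
    - move=> i j hi hj nij; rewrite /Q' => e.
      have := F i.+2 j.+2 ltac:(lia) ltac:(lia) ltac:(lia) ltac:(lia).
      by rewrite !oddSS.
    - move=> v b hv1 hv2.
      have [t [ht qt ot]] := tw (v - 1) b ltac:(lia) ltac:(lia).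
      case: t ht qt ot => [|[|t]] ht qt ot; [lia|lia|].
      exists t; split; first by clear -ht; lia.
        by rewrite /Q' qt; lia.
      by rewrite -oddSS.
  exists r.+1, u; split; first lia.
    have -> : ((L.+2).*2 - 1 = 2 + (L.+1.*2 - 1))%N by lia.
    rewrite D_cat pairsS.
    have -> : D (fun i => Q (2 + i)%N) (L.+1.*2 - 1) = D Q' (L.+1.*2 - 1).
      by rewrite /Q' D_shift.
    rewrite HD /D /mkseq /= q1 q2 Q0 subrr; congr (_ :: _ :: _); lia.
  move: HQ; rewrite /Q'.
  have -> : ((L.+2).*2 - 1 = (L.+1.*2 - 1).+2)%N by lia.
  lia.
-
  have desc : forall j, (j <= L.+1)%N -> forall i, (i <= j)%N -> Q i = - i%:Z.
    elim => [|j IHj] hj i hi.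
      by have -> : i = 0%N by lia.
    case: (ltnP i j.+1) => hij; first by apply: IHj; lia.
    have -> : i = j.+1 by lia.
    case: j IHj hj hi hij => [|j] IHj hj hi hij; first by rewrite q1.
    have qj := IHj ltac:(lia) j.+1 (leqnn _).
    have qj' := IHj ltac:(lia) j ltac:(lia).
    have [a b] := st j.+1 ltac:(lia).
    have [c d] := rng j.+2 ltac:(lia).
    have n1 : Q j.+2 <> Q j.
      move=> e; have := F j j.+2 ltac:(lia) ltac:(lia) ltac:(lia) (esym e).
      by rewrite oddSS; case: (odd j).
    have n2 : Q j.+2 <> Q j.+1.
      move=> e.
      have [t0 [ht0 qt0 ot0]] := tw 0 true ltac:(lia) ltac:(lia).
      have [t1 [ht1 qt1 ot1]] := tw (1 - L.+2%:Z) true ltac:(lia) ltac:(lia).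
      have g0 : (j.+2 < t0)%N.
        case: (ltnP j.+2 t0) => // h0.
        case: (ltnP t0 j.+2) => h0'.
          have := IHj ltac:(lia) t0 ltac:(lia).
          case: t0 {h0 h0' ht0} qt0 ot0 => [|t0] qt0 ot0 //; lia.
        have e0 : t0 = j.+2 by lia. rewrite e0 in qt0.
        lia.
      have g1 : (j.+2 < t1)%N.
        case: (ltnP j.+2 t1) => // h1.
        case: (ltnP t1 j.+2) => h1'.
          have := IHj ltac:(lia) t1 ltac:(lia); lia.
        have e1 : t1 = j.+2 by lia. rewrite e1 in qt1.
        lia.
      have [t2 [ht2 qt2]] : exists t2, (j.+2 < t2)%N /\ (t2 < L.+2.*2)%N /\ Q t2 = Q j.+1 /\ True.
        case: (leqP t0 t1) => h01.
          have [t [? ? ?]] := ivt (v := Q j.+1) st h01 ht1 ltac:(right; lia).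
          exists t; split; lia.
        have [t [? ? ?]] := ivt (v := Q j.+1) st (ltnW h01) ht0 ltac:(left; lia).
        exists t; split; lia.
      case: qt2 => ht2' [qt2 _].
      exact: (NT j.+1 j.+2 t2 ltac:(lia) ltac:(lia) ht2' (esym e) (etrans e (esym qt2))).
    lia.
  have qL := desc L.+1 (leqnn _) L.+1 (leqnn _).
  have qL' := desc L.+1 (leqnn _) L ltac:(lia).
  have [a0 b0] := st L.+1 ltac:(lia).
  have [c0 d0] := rng L.+2 ltac:(lia).
  have qL2 : Q L.+2 = - L.+1%:Z.
    have : Q L.+2 <> Q L.
      move=> e; have := F L L.+2 ltac:(lia) ltac:(lia) ltac:(lia) (esym e).
      by rewrite oddSS; case: (odd L).
    lia.
  have asc : forall i, (i <= L.+1)%N -> forall i', (i' <= i)%N -> Q (L.+2 + i')%N = - L.+1%:Z + i'%:Z.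
    elim => [|i IHi] hi i' hi'.
      have -> : i' = 0%N by lia.
      by rewrite addn0 qL2; lia.
    case: (ltnP i' i.+1) => hii; first by apply: IHi; lia.
    have ei : i' = i.+1 by lia.
    subst i'; clear hi' hii.
    have qi := IHi ltac:(lia) i (leqnn _).
    have [a b] := st (L.+2 + i)%N ltac:(lia).
    rewrite -addnS in a b.
    have [c d] := rng (L.+2 + i.+1)%N ltac:(lia).
    have n1 : Q (L.+2 + i.+1)%N <> Q (L.+2 + i)%N.
      move=> e.
      case: i IHi hi qi a b c d e => [|i] IHi hi qi a b c d e.
        rewrite addn0 in qi e.
        exact: (NT L.+1 L.+2 (L.+2 + 1)%N ltac:(lia) ltac:(lia) ltac:(lia) ltac:(lia) ltac:(lia)).
      have q' := desc L.+1 (leqnn _) (L.+1 - i.+1)%N ltac:(lia).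
      exact: (NT (L.+1 - i.+1)%N (L.+2 + i.+1)%N (L.+2 + i.+2)%N ltac:(lia) ltac:(lia) ltac:(lia) ltac:(lia) ltac:(lia)).
    have n2 : Q (L.+2 + i.+1)%N <> Q (L.+2 + i)%N - 1.
      move=> e; clear n1.
      case: i IHi hi qi a b c d e => [|i] IHi hi qi a b c d e.
        lia.
      have qi' := IHi ltac:(lia) i ltac:(lia).
      have := F (L.+2 + i)%N (L.+2 + i.+2)%N ltac:(lia) ltac:(lia) ltac:(lia) ltac:(lia).
      by rewrite addnS addnS oddSS; case: (odd _).
    lia.
  exists 0%N, L.+1; split; first lia.
    have -> : ((L.+2).*2 - 1 = L.+1 + (1 + L.+1))%N by lia.
    have E1 : D Q L.+1 = pw L.+1 (-1).
      apply: D_pw => i hi.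
      rewrite (desc L.+1 (leqnn _) i.+1) ?(desc L.+1 (leqnn _) i) //; lia.
    have E2 : D (fun i => Q (L.+1 + i)%N) 1 = [:: 0].
      rewrite D1 addn0 qL.
      have -> : (L.+1 + 1 = L.+2)%N by lia.
      rewrite qL2; congr [:: _]; lia.
    have E3 : D (fun i => Q (L.+1 + (1 + i))%N) L.+1 = pw L.+1 1.
      apply: D_pw => i hi.
      have := asc L.+1 (leqnn _) i.+1 hi; have := asc L.+1 (leqnn _) i ltac:(lia).
      have -> : (L.+1 + (1 + i.+1) = L.+2 + i.+1)%N by lia.
      have -> : (L.+1 + (1 + i) = L.+2 + i)%N by lia.
      lia.
    by rewrite D_cat D_cat E1 E2 E3.
  have := asc L.+1 (leqnn _) L.+1 (leqnn _).
  have -> : ((L.+2).*2 - 1 = L.+2 + L.+1)%N by lia.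
  lia.
Qed.

Definition Concl (n k : nat) (d : seq int) (h : int) (eps : seq int) : Prop :=
  (h = 0 /\
     (is_rotation_of d (pw (k - 1) 1 ++ [:: 0] ++ pw (k - 1) (-1) ++ [:: 0])
      \/ d = pw n 1 \/ d = pw n (-1)))
  \/ (0 < h /\ all (fun e => e \in [:: 0; -1]) eps /\
      h = (k - 1)%N%:Z /\ eps = pairs (k - 1) 0 (-1) ++ [:: 0])
  \/ (0 < h /\ all (fun e => e \in [:: 0; 1]) eps /\
      exists hn : nat, h = hn%:Z /\ (1 <= hn <= k - 1)%N /\
        ((n %% 4 == 0)%N -> odd hn) /\ ((n %% 4 == 2)%N -> ~~ odd hn) /\
        d = pw (k - hn + 1) 1 ++ pairs (hn - 1) 0 1 ++ pw (k - hn) 1 ++ [:: hn%:Z])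
  \/ (0 < h /\ 0 \in eps /\ 1 \in eps /\ -1 \in eps /\
      exists hn m : nat, h = hn%:Z /\ (1 <= hn <= k - 2)%N /\ (m <= k - 1 - hn)%N /\
        d = pw m 1 ++ [:: 0] ++ pw m.+1 (-1) ++ pairs (hn - 1) 0 (-1)
            ++ pw (k - hn - m - 1) (-1) ++ [:: 0] ++ pw (k - hn - m - 1) 1
            ++ [:: hn%:Z]).

Lemma oddE x : odd x = (x %% 2 == 1)%N.
Proof. by rewrite modn2; case: odd. Qed.

Lemma all_pw (a : pred int) c x : a x -> all a (pw c x).
Proof. by move=> ax; rewrite all_nseq ax orbT. Qed.

Lemma all_pairs (a : pred int) c x y : a x -> a y -> all a (pairs c x y).
Proof. by move=> ax ay; elim: c => //= c ->; rewrite ax ay. Qed.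

Lemma extreme_end k P x c : good k P -> (x < k.*2)%N -> (c < k.*2)%N ->
  (P c - P x = k%:Z \/ P c - P x = - k%:Z) ->
  (forall j, (j < k.*2)%N -> P x <= P j) \/ (forall j, (j < k.*2)%N -> P j <= P x) ->
  x = 0%N \/ x = (k.*2 - 1)%N.
Proof.
move=> G hx hc e ext.
case: x hx e ext => [|x] hx e ext; first by left.
case: (ltnP x.+2 k.*2) => hx2; last by right; lia.
have U := once G hx hc e.
have [a b] := g_step G hx2.
have [a' b'] := g_step G hx.
have n1 : P x <> P x.+1 by move=> E; have := U x ltac:(lia) E; lia.
have n2 : P x.+2 <> P x.+1 by move=> E; have := U x.+2 hx2 E; lia.
have E : P x = P x.+2.
  case: ext => H; have := H x ltac:(lia); have := H x.+2 hx2; lia.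
have := F1' G (i := x) (j := x.+2) ltac:(lia) hx2 ltac:(lia) E.
by rewrite oddSS; case: (odd x).
Qed.

Lemma caseA_contra k P (h : int) : good k P -> 0 <= h -> h < k%:Z ->
  (exists c : int, h + P (k.*2 - 1)%N = c * (k.*2)%:Z) ->
  P (k.*2 - 1)%N <= - k%:Z -> False.
Proof.
move=> G h0 hk [c hc] hm.
have := Pbound G (j := (k.*2 - 1)%N) ltac:(have := g_k G; lia).
move=> /andP[b1 b2].
have := @cong0 (h + P (k.*2 - 1)%N + (k.*2)%:Z) (c + 1) (k.*2)%:Z ltac:(have := g_k G; lia).
rewrite mulrDl mul1r -hc => H.
have := H erefl; lia.
Qed.

Lemma lowonce k P p : good k P -> P (k.*2 - 1)%N = (k + p)%:Z - 1 ->
  (forall j, (j < k.*2)%N -> 0 <= P j) ->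
  forall t1 t2, (t1 < k.*2)%N -> (t2 < k.*2)%N ->
  ((0 <= P t1 /\ P t1 <= p%:Z - 1) \/ (k%:Z <= P t1 /\ P t1 <= (k + p)%:Z - 1)) ->
  P t2 = P t1 -> t2 = t1.
Proof.
move=> G PM Hb t1 t2 h1 h2 H e.
have k3 := g_k G.
case: H => [[c1 c2]|[c1 c2]].
  have [c [hc ec]] := @ivt2 k.*2 P 0%N (k.*2 - 1)%N (P t1 + k%:Z) (g_step G) ltac:(lia) ltac:(lia)
     ltac:(left; rewrite (g_P0 G) PM; lia).
  exact: (once G h1 hc ltac:(left; lia) h2 e).
have [c [hc ec]] := @ivt2 k.*2 P 0%N (k.*2 - 1)%N (P t1 - k%:Z) (g_step G) ltac:(lia) ltac:(lia)
     ltac:(left; rewrite (g_P0 G) PM; lia).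
exact: (once G h1 hc ltac:(right; lia) h2 e).
Qed.

Lemma A1 k P p : good k P -> P (k.*2 - 1)%N = (k + p)%:Z - 1 -> (1 <= p <= k)%N ->
  (forall j, (j < k.*2)%N -> 0 <= P j) ->
  forall j, (j <= p)%N -> forall i, (i <= j)%N -> P i = i%:Z.
Proof.
move=> G PM hp Hb.
have k3 := g_k G.
have LO := lowonce G PM Hb.
elim => [|j IH] hj i hi.
  have -> : i = 0%N by lia.
  by rewrite (g_P0 G).
case: (ltnP i j.+1) => hij; first by apply: IH; lia.
have ei : i = j.+1 by lia.
subst i; clear hi hij.
have Pj := IH ltac:(lia) j (leqnn _).
have [a b] := g_step G (j := j) ltac:(lia).
have n1 : P j.+1 <> P j.
  move=> e; have := LO j j.+1 ltac:(lia) ltac:(lia) ltac:(left; lia) e; lia.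
have n2 : P j.+1 <> P j - 1.
  case: j IH hj Pj a b n1 => [|j] IH hj Pj a b n1 e.
    have := Hb 1%N ltac:(lia); lia.
  have Pj' := IH ltac:(lia) j ltac:(lia).
  have := LO j j.+2 ltac:(lia) ltac:(lia) ltac:(left; lia) ltac:(lia); lia.
lia.
Qed.

Lemma A2 k P p : good k P -> P (k.*2 - 1)%N = (k + p)%:Z - 1 -> (1 <= p <= k)%N ->
  (forall j, (j < k.*2)%N -> 0 <= P j) ->
  (forall j, (j < k.*2)%N -> P j <= P (k.*2 - 1)%N) ->
  forall i, (i <= p - 1)%N -> forall i', (i' <= i)%N -> P (k.*2 - 1 - i')%N = (k + p)%:Z - 1 - i'%:Z.
Proof.
move=> G PM hp Hb Ha.
have k3 := g_k G.
have LO := lowonce G PM Hb.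
elim => [|i IH] hi i' hi'.
  have -> : i' = 0%N by lia.
  by rewrite subn0 PM; lia.
case: (ltnP i' i.+1) => hij; first by apply: IH; lia.
have ei : i' = i.+1 by lia.
subst i'; clear hi' hij.
have Pi := IH ltac:(lia) i (leqnn _).
have [a b] := g_step G (j := (k.*2 - 1 - i.+1)%N) ltac:(lia).
have et : (k.*2 - 1 - i.+1).+1 = (k.*2 - 1 - i)%N by lia.
rewrite et in a b.
have n1 : P (k.*2 - 1 - i.+1)%N <> P (k.*2 - 1 - i)%N.
  move=> e; have := LO (k.*2 - 1 - i)%N (k.*2 - 1 - i.+1)%N ltac:(lia) ltac:(lia) ltac:(right; lia) e; lia.
have n2 : P (k.*2 - 1 - i.+1)%N <> P (k.*2 - 1 - i)%N + 1.
  case: i IH hi Pi a b n1 et => [|i] IH hi Pi a b n1 et e.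
    have := Ha (k.*2 - 1 - 1)%N ltac:(lia); lia.
  have Pi' := IH ltac:(lia) i ltac:(lia).
  have := LO (k.*2 - 1 - i)%N (k.*2 - 1 - i.+2)%N ltac:(lia) ltac:(lia) ltac:(right; lia) ltac:(lia); lia.
lia.
Qed.

Lemma A3 k P p : good k P -> P (k.*2 - 1)%N = (k + p)%:Z - 1 -> (1 <= p <= k)%N ->
  (forall j, (j < k.*2)%N -> 0 <= P j) ->
  (forall j, (j < k.*2)%N -> P j <= P (k.*2 - 1)%N) ->
  forall d, (p + d <= k.*2 - p)%N -> forall t, (p <= t)%N -> (t <= p + d)%N ->
  P t = (p + (t - p) %/ 2)%N%:Z.
Proof.
move=> G PM hp Hb Ha.
have k3 := g_k G.
have LO := lowonce G PM Hb.
have HA1 := A1 G PM hp Hb.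
have HA2 := A2 G PM hp Hb Ha.
have NT := notriple G.
have Pp : P p = p%:Z by apply: (HA1 p) => //.
have Ppm : P (p - 1)%N = (p - 1)%N%:Z by apply: (HA1 p) => //; lia.
have PNp : P (k.*2 - p)%N = k%:Z.
  have := HA2 (p - 1)%N (leqnn _) (p - 1)%N (leqnn _).
  have -> : (k.*2 - 1 - (p - 1) = k.*2 - p)%N by lia.
  lia.
elim => [|d IH] hd t ht1 ht2.
  have -> : t = p by lia.
  by rewrite Pp subnn div0n addn0.
case: (ltnP t (p + d.+1)) => htt; first by apply: IH; lia.
have -> : t = (p + d).+1 by lia.
clear t ht1 ht2 htt.
have IHv : forall t, (p <= t)%N -> (t <= p + d)%N -> P t = (p + (t - p) %/ 2)%N%:Z.
  by apply: IH; lia.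
clear IH.
set t0 := (p + d)%N.
have [a b] := g_step G (j := t0) ltac:(lia).
have [j [ej|ej]] : exists j, d = (2 * j)%N \/ d = (2 * j).+1 by exists (d %/ 2)%N; lia.
-
  have -> : (p + ((t0.+1) - p) %/ 2 = p + j)%N by rewrite /t0; lia.
  have Pt0 : P t0 = (p + j)%N%:Z.
    rewrite (IHv t0) /t0 ?leq_addr //; congr (_%:Z); lia.
  have Pt0m : P t0.-1 = (p + j)%N%:Z - 1.
    case: j ej Pt0 => [|j] ej Pt0.
      have -> : t0.-1 = (p - 1)%N by rewrite /t0; lia.
      rewrite Ppm; lia.
    rewrite (IHv t0.-1); [|rewrite /t0; lia|rewrite /t0; lia].
    have -> : ((t0.-1 - p) %/ 2 = j)%N by rewrite /t0; lia.
    lia.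
  have n1 : P t0.+1 <> (p + j)%N%:Z - 1.
    move=> e.
    have := F1' G (i := t0.-1) (j := t0.+1) ltac:(lia) ltac:(lia) ltac:(lia) ltac:(lia).
    have -> : t0.+1 = (t0.-1).+2 by rewrite /t0; lia.
    by rewrite oddSS; case: (odd _).
  have n2 : P t0.+1 <> (p + j)%N%:Z + 1.
    move=> e.
    have pre : forall t', (t' < k.*2)%N -> (p + j)%N%:Z - k%:Z < P t' /\ P t' < (p + j)%N%:Z + k%:Z.
      move=> t' ht'; have := Hb t' ht'; have := Ha t' ht'; rewrite PM; rewrite /t0 in hd; lia.
    have [t [ht Pt ot]] := g_surj G (~~ odd t0) pre.
    have gt0 : (t0 < t)%N.
      case: (ltnP t0 t) => // h.
      case: (ltnP t p) => h'.
        have := HA1 p (leqnn _) t ltac:(lia); lia.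
      have := IHv t h' h; rewrite Pt => E.
      have : t = t0 by rewrite /t0 in h *; lia.
      by move=> E'; rewrite E' in ot; case: (odd t0) ot.
    have gt1 : t <> t0.+1 by move=> E'; rewrite E' in Pt; lia.
    have gt2 : t <> t0.+2 by move=> E'; rewrite E' oddSS in ot; case: (odd t0) ot.
    have gt3 : (t < k.*2 - p)%N.
      case: (ltnP t (k.*2 - p)) => // h.
      have := HA2 (p - 1)%N (leqnn _) (k.*2 - 1 - t)%N ltac:(lia).
      have -> : (k.*2 - 1 - (k.*2 - 1 - t) = t)%N by lia.
      rewrite Pt; rewrite /t0 in hd; lia.
    have [t'' [h1 h2 h3]] := @ivt_up k.*2 P t (k.*2 - p)%N ((p + j)%N%:Z + 1) (g_step G)
          ltac:(lia) ltac:(lia) ltac:(lia) ltac:(rewrite PNp; rewrite /t0 in hd; lia).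
    have ht'' : t <> t'' by move=> E'; rewrite -E' Pt in h3; lia.
    have [c d'] := g_step G (j := t0.+1) ltac:(lia).
    have : P t0.+2 = (p + j)%N%:Z \/ P t0.+2 = (p + j)%N%:Z + 1 \/ P t0.+2 = (p + j)%N%:Z + 2 by lia.
    case => [E|[E|E]].
    + have := F1' G (i := t0) (j := t0.+2) ltac:(lia) ltac:(lia) ltac:(lia) ltac:(lia).
      by rewrite oddSS; case: (odd _).
    + exact: (NT t0.+1 t0.+2 t'' ltac:(lia) ltac:(lia) ltac:(lia) ltac:(lia) ltac:(lia)).
    + have [t1 [i1 i2 i3]] := @ivt_dn k.*2 P t0.+2 t ((p + j)%N%:Z + 1) (g_step G)
          ltac:(lia) ltac:(lia) ltac:(lia) ltac:(lia).
      have n3 : t1 <> t0.+2 by move=> E'; rewrite E' in i3; lia.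
      have n4 : t1 <> t by move=> E'; rewrite E' in i3; lia.
      exact: (NT t0.+1 t1 t'' ltac:(lia) ltac:(lia) ltac:(lia) ltac:(lia) ltac:(lia)).
  rewrite Pt0 in a b; lia.
-
  have -> : (p + ((t0.+1) - p) %/ 2 = p + j.+1)%N by rewrite /t0; lia.
  have Pt0 : P t0 = (p + j)%N%:Z.
    rewrite (IHv t0) /t0 ?leq_addr //; congr (_%:Z); lia.
  have Pt0m : P t0.-1 = (p + j)%N%:Z.
    rewrite (IHv t0.-1); [|rewrite /t0; lia|rewrite /t0; lia].
    congr (_%:Z); rewrite /t0; lia.
  have n1 : P t0.+1 <> (p + j)%N%:Z.
    move=> e; exact: (NT t0.-1 t0 t0.+1 ltac:(lia) ltac:(lia) ltac:(lia) ltac:(lia) ltac:(lia)).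
  have n2 : P t0.+1 <> (p + j)%N%:Z - 1.
    move=> e.
    clear n1; case: j ej Pt0 Pt0m e => [|j] ej Pt0 Pt0m e.
      have := LO (p - 1)%N t0.+1 ltac:(lia) ltac:(lia) ltac:(left; lia) ltac:(lia).
      rewrite /t0; lia.
    have q2 : P (t0 - 2)%N = (p + j)%N%:Z.
      rewrite (IHv (t0 - 2)%N); [|rewrite /t0; lia|rewrite /t0; lia].
      congr (_%:Z); rewrite /t0; lia.
    have q3 : P (t0 - 3)%N = (p + j)%N%:Z.
      rewrite (IHv (t0 - 3)%N); [|rewrite /t0; lia|rewrite /t0; lia].
      congr (_%:Z); rewrite /t0; lia.
    exact: (NT (t0 - 3)%N (t0 - 2)%N t0.+1 ltac:(rewrite /t0; lia) ltac:(rewrite /t0; lia) ltac:(lia) ltac:(lia) ltac:(lia)).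
  rewrite Pt0 in a b; lia.
Qed.

Lemma caseA k P (h : int) a0 b0 : good k P -> 0 <= h -> h < k%:Z ->
  (exists c : int, h + P (k.*2 - 1)%N = c * (k.*2)%:Z) ->
  (a0 < k.*2)%N -> (b0 < k.*2)%N ->
  (forall j, (j < k.*2)%N -> P j <= P a0) -> (forall j, (j < k.*2)%N -> P b0 <= P j) ->
  k%:Z <= P a0 - P b0 ->
  Concl k.*2 k (D P (k.*2 - 1) ++ [:: h]) h (D P (k.*2 - 1)).
Proof.
move=> G h0 hk hc ha hb Ha Hb hW.
have k3 := g_k G; have st := g_step G; have P0 := g_P0 G.
have [cb [hcb ecb]] := @ivt2 k.*2 P b0 a0 (P b0 + k%:Z) st hb ha ltac:(left; lia).
have eb := extreme_end G hb hcb ltac:(left; lia) (or_introl Hb).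
have [ca [hca eca]] := @ivt2 k.*2 P b0 a0 (P a0 - k%:Z) st hb ha ltac:(left; lia).
have ea := extreme_end G ha hca ltac:(right; lia) (or_intror Ha).
have [eb0 ea0] : b0 = 0%N /\ a0 = (k.*2 - 1)%N.
  case: eb => eb; case: ea => ea; subst.
  - lia.
  - by [].
  - exfalso; apply: (caseA_contra G h0 hk hc); lia.
  - lia.
subst a0 b0.
have [p [PM hp]] : exists p : nat, P (k.*2 - 1)%N = (k + p)%N%:Z - 1 /\ (1 <= p <= k)%N.
  exists (absz (P (k.*2 - 1)%N - k%:Z + 1)).
  have := Pbound G (j := (k.*2 - 1)%N) ltac:(lia); lia.
have Hb' : forall j, (j < k.*2)%N -> 0 <= P j by move=> j hj; have := Hb j hj; lia.
have HA1 := A1 G PM hp Hb'.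
have HA2 := A2 G PM hp Hb' Ha.
have HA3 := A3 G PM hp Hb' Ha.
have PNp : P (k.*2 - p)%N = k%:Z.
  have := HA2 (p - 1)%N (leqnn _) (p - 1)%N (leqnn _).
  have -> : (k.*2 - 1 - (p - 1) = k.*2 - p)%N by lia.
  lia.
have pev : ~~ odd p.
  have := F2' G (i := 0%N) (j := (k.*2 - p)%N) ltac:(lia) ltac:(lia) ltac:(left; lia).
  rewrite oddB ?leq_double ?odd_double /=; last lia.
  by move/esym => ->.
have hp2 : (2 <= p)%N by move: pev; rewrite oddE; lia.
have hv : h = (k - p + 1)%N%:Z.
  case: hc => c hc.
  have := @cong0 (h + P (k.*2 - 1)%N - (k.*2)%:Z) (c - 1) (k.*2)%:Z ltac:(lia).
  rewrite mulrBl mul1r -hc => H.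
  have := H erefl ltac:(lia) ltac:(lia); lia.
have ED : D P (k.*2 - 1) = pw p 1 ++ pairs (k - p) 0 1 ++ pw (p - 1) 1.
  have -> : (k.*2 - 1 = p + (2 * (k - p) + (p - 1)))%N by lia.
  rewrite D_cat D_cat.
  have E1 : D P p = pw p 1.
    apply: D_pw => i hi.
    rewrite (HA1 p (leqnn _) i.+1 hi) (HA1 p (leqnn _) i ltac:(lia)); lia.
  have E2 : D (fun i => P (p + i)%N) (2 * (k - p)) = pairs (k - p) 0 1.
    apply: D_pairs => i hi.
    have H3 := HA3 (k.*2 - p - p)%N ltac:(lia).
    rewrite (H3 (p + (2 * i).+1)%N ltac:(lia) ltac:(lia)).
    rewrite (H3 (p + (2 * i))%N ltac:(lia) ltac:(lia)).
    rewrite (H3 (p + (2 * i).+2)%N ltac:(lia) ltac:(lia)).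
    split; lia.
  have E3 : D (fun i => P (p + (2 * (k - p) + i))%N) (p - 1) = pw (p - 1) 1.
    apply: D_pw => i hi.
    have -> : (p + (2 * (k - p) + i.+1) = k.*2 - 1 - (p - 2 - i))%N by lia.
    have -> : (p + (2 * (k - p) + i) = k.*2 - 1 - (p - 1 - i))%N by lia.
    rewrite (HA2 (p - 1)%N (leqnn _) (p - 2 - i)%N ltac:(lia)).
    rewrite (HA2 (p - 1)%N (leqnn _) (p - 1 - i)%N ltac:(lia)).
    lia.
  by rewrite E1 E2 E3.
right; right; left.
split; first lia.
split.
  rewrite ED !all_cat; apply/and3P; split; [apply: all_pw|apply: all_pairs|apply: all_pw] => //.
exists (k - p + 1)%N; split => //.
split; first lia.
split.
  move/eqP => H4; rewrite oddE; apply/eqP; move: pev; rewrite oddE; lia.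
split.
  move/eqP => H4; rewrite oddE; apply/negP => /eqP; move: pev; rewrite oddE; lia.
rewrite ED hv -!catA.
have -> : (k - (k - p + 1) + 1 = p)%N by lia.
have -> : (k - p + 1 - 1 = k - p)%N by lia.
have -> : (k - (k - p + 1) = p - 1)%N by lia.
by [].
Qed.

Lemma B1 k P a : good k P -> (a < k.*2)%N -> (forall j, (j < k.*2)%N -> P j <= P a) ->
  (forall j, (j < a)%N -> P j <> P a) -> P (k.*2 - 1)%N <= 0 ->
  forall j, (j <= a)%N -> forall i, (i <= j)%N -> P i = i%:Z.
Proof.
move=> G ha Ha Hf Pe.
have k3 := g_k G; have st := g_step G; have P0 := g_P0 G.
have NT := notriple G.
elim => [|j IH] hj i hi.
  have -> : i = 0%N by lia.
  by rewrite P0.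
case: (ltnP i j.+1) => hij; first by apply: IH; lia.
have ei : i = j.+1 by lia.
subst i; clear hi hij.
have Pj := IH ltac:(lia) j (leqnn _).
have jM : j%:Z < P a by have := Ha j ltac:(lia); have := Hf j ltac:(lia); lia.
have [t2 [h1 h2 h3]] := @ivt_dn k.*2 P a (k.*2 - 1)%N j%:Z st ltac:(lia) ltac:(lia) ltac:(lia) ltac:(lia).
have t2a : a <> t2 by move=> E; rewrite -E in h3; lia.
have [s1 s2] := st j ltac:(lia).
have n1 : P j.+1 <> j%:Z.
  move=> e; exact: (NT j j.+1 t2 ltac:(lia) ltac:(lia) ltac:(lia) ltac:(lia) ltac:(lia)).
have n2 : P j.+1 <> j%:Z - 1.
  case: j IH hj Pj jM h3 s1 s2 n1 => [|j] IH hj Pj jM h3 s1 s2 n1 e.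
    have [t1 [g1 g2 g3]] := @ivt_up k.*2 P 1%N a 0 st ltac:(lia) ltac:(lia) ltac:(lia) ltac:(lia).
    have t1a : t1 <> a by move=> E; rewrite E in g3; lia.
    have t11 : t1 <> 1%N by move=> E; rewrite E in g3; lia.
    exact: (NT 0%N t1 t2 ltac:(lia) ltac:(lia) ltac:(lia) ltac:(lia) ltac:(lia)).
  have Pj' := IH ltac:(lia) j ltac:(lia).
  have := F1' G (i := j) (j := j.+2) ltac:(lia) ltac:(lia) ltac:(lia) ltac:(lia).
  by rewrite oddSS; case: (odd j).
lia.
Qed.

Lemma Bdesc k P a : good k P -> (1 <= a)%N -> (a.*2.+1 < k.*2)%N ->
  (forall i, (i <= a)%N -> P i = i%:Z) ->
  (forall j, (j < k.*2)%N -> P j <= a%:Z) ->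
  (forall j, (j < a)%N -> P j <> a%:Z) ->
  (exists t, [/\ (t < k.*2)%N, P t = a%:Z & odd t = ~~ odd a]) ->
  forall i, (i <= a)%N -> forall i', (i' <= i)%N -> P (a.+1 + i')%N = a%:Z - i'%:Z.
Proof.
move=> G ha haN HB Ha Hf [t' [ht' Pt' ot']].
have k3 := g_k G; have st := g_step G; have P0 := g_P0 G.
have NT := notriple G.
have Pa := HB a (leqnn _).
have Pam := HB a.-1 ltac:(lia).
have flat : P a.+1 = a%:Z.
  have [s1 s2] := st a ltac:(lia).
  have [s3 s4] := st a.-1 ltac:(lia).
  rewrite prednK in s3 s4; last lia.
  have := Ha a.+1 ltac:(lia).
  move=> s5.
  case: (eqVneq (P a.+1) a%:Z) => // ne; exfalso.
  have e1 : P a.+1 = a%:Z - 1 by lia.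
  have gt : (a < t')%N.
    case: (ltngtP a t') => // h.
      by case: (Hf t' h Pt').
    by move: ot'; rewrite -h; case: (odd a).
  have ne1 : t' <> a.+1 by move=> E; rewrite E in Pt'; lia.
  have ne2 : t' <> a.+2 by move=> E; move: ot'; rewrite E oddSS; case: (odd a).
  have [s6 s7] := st t'.-1 ltac:(lia).
  rewrite prednK in s6 s7; last lia.
  have := Ha t'.-1 ltac:(lia); move=> s8.
  case: (eqVneq (P t'.-1) a%:Z) => E.
    have l1 : (a < t'.-1)%N by lia.
    have l2 : (t'.-1 < t')%N by lia.
    exact: (NT a t'.-1 t' l1 l2 ht' (etrans Pa (esym E)) (etrans E (esym Pt'))).
  have E' : P t'.-1 = a%:Z - 1 by lia.
  exact: (NT a.-1 a.+1 t'.-1 ltac:(lia) ltac:(lia) ltac:(lia) ltac:(lia) ltac:(lia)).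
elim => [|i IH] hi i' hi'.
  have -> : i' = 0%N by lia.
  by rewrite addn0 flat; lia.
case: (ltnP i' i.+1) => hij; first by apply: IH; lia.
have ei : i' = i.+1 by lia.
subst i'; clear hi' hij.
have Pi := IH ltac:(lia) i (leqnn _).
have [s1 s2] := st (a.+1 + i)%N ltac:(lia).
rewrite -addnS in s1 s2.
have n1 : P (a.+1 + i.+1)%N <> P (a.+1 + i)%N + 1.
  case: i IH hi Pi s1 s2 => [|i] IH hi Pi s1 s2 e.
    have := Ha (a.+1 + 1)%N ltac:(lia); lia.
  have Pi' := IH ltac:(lia) i ltac:(lia).
  have := F1' G (i := (a.+1 + i)%N) (j := (a.+1 + i.+2)%N) ltac:(lia) ltac:(lia) ltac:(lia) ltac:(lia).
  by rewrite !addnS oddSS; case: (odd _).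
have n2 : P (a.+1 + i.+1)%N <> P (a.+1 + i)%N.
  clear n1; case: i IH hi Pi s1 s2 => [|i] IH hi Pi s1 s2 e.
    rewrite addn0 in Pi e.
    exact: (NT a a.+1 (a.+1 + 1)%N ltac:(lia) ltac:(lia) ltac:(lia) ltac:(lia) ltac:(lia)).
  have Pa' := HB (a - i.+1)%N ltac:(lia).
  exact: (NT (a - i.+1)%N (a.+1 + i.+1)%N (a.+1 + i.+2)%N ltac:(lia) ltac:(lia) ltac:(lia) ltac:(lia) ltac:(lia)).
lia.
Qed.

Lemma iter_rot1 (Y X : seq int) : iter (size Y) rot1 (X ++ Y) = Y ++ X.
Proof.
elim/last_ind: Y X => [|Y y IH] X; first by rewrite cats0.
rewrite size_rcons iterSr /rot1 -rcons_cat rotr1_rcons.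
by rewrite -cat_cons IH cat_rcons.
Qed.

Lemma mem_pw (x : int) c : (0 < c)%N -> x \in pw c x.
Proof. by move=> hc; rewrite /pw mem_nseq eqxx andbT. Qed.

Lemma caseB_a0 k P (h : int) : good k P -> h = - P (k.*2 - 1)%N ->
  (forall i, (i < k.*2)%N -> 1 - k%:Z <= P i /\ P i <= 0) ->
  (forall (v : int) (b : bool), 1 - k%:Z <= v -> v <= 0 -> exists t, [/\ (t < k.*2)%N, P t = v & odd t = b]) ->
  Concl k.*2 k (D P (k.*2 - 1) ++ [:: h]) h (D P (k.*2 - 1)).
Proof.
move=> G hv rng tw.
have k3 := g_k G.
have [r [u [ru ED Pe]]] := @subclaim k P ltac:(lia) (g_P0 G) (g_step G) rng
   (fun i j hi hj nij e => F1' G hi hj nij e) tw.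
rewrite Pe opprK in hv.
case: r ru ED Pe hv => [|r] ru ED Pe hv.
  left; split => //; left.
  exists k; rewrite ED hv.
  have -> : u = (k - 1)%N by lia.
  have E : size (pw (k - 1) (-1) ++ [:: 0]) = k by rewrite size_cat size_nseq /=; lia.
  have -> : pw (k - 1) 1 ++ [:: 0] ++ pw (k - 1) (-1) ++ [:: 0] =
     (pw (k - 1) 1 ++ [:: 0]) ++ (pw (k - 1) (-1) ++ [:: 0]) by rewrite -catA.
  by rewrite -[X in iter X _ _]E iter_rot1 /= -!catA.
case: u ru ED => [|u] ru ED.
  right; left.
  split; first lia.
  split.
    rewrite ED cats0 all_cat; apply/andP; split; first by apply: all_pairs.
    by [].
  split; first lia.
  by rewrite ED cats0; have -> : (k - 1 = r.+1)%N by lia.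
right; right; right.
split; first lia.
split; first by rewrite ED !mem_cat inE eqxx !orbT.
split; first by rewrite ED !mem_cat (mem_pw _ (isT : (0 < u.+1)%N)) !orbT.
split; first by rewrite ED /= !inE eqxx !orbT.
exists r.+1, 0%N; split; first by [].
split; first lia.
split; first lia.
have -> : (k - r.+1 - 0 - 1 = u.+1)%N by lia.
rewrite ED hv subn1 /= -!catA /pairs /= -!catA /=.
done.
Qed.

Lemma pw_snoc (x : int) a l : pw a x ++ x :: l = pw a.+1 x ++ l.
Proof. by elim: a => //= a ->. Qed.

Lemma caseB_a1 k P (h : int) a : good k P -> h = - P (k.*2 - 1)%N -> (1 <= a)%N ->
  (forall i, (i <= a)%N -> P i = i%:Z) ->
  (forall j, (j < k.*2)%N -> P j <= a%:Z) ->
  (forall j, (j < a)%N -> P j <> a%:Z) ->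
  (forall j, (j < k.*2)%N -> a%:Z + 1 - k%:Z <= P j) ->
  (forall (v : int) (b : bool), a%:Z + 1 - k%:Z <= v -> v <= a%:Z ->
      exists t, [/\ (t < k.*2)%N, P t = v & odd t = b]) ->
  Concl k.*2 k (D P (k.*2 - 1) ++ [:: h]) h (D P (k.*2 - 1)).
Proof.
move=> G hv ha Hpre Hmax Hf Hlow tw.
have k3 := g_k G; have st := g_step G; have P0 := g_P0 G.
have NT := notriple G.
have ak : (a <= k - 1)%N by have := Hlow 0%N ltac:(lia); rewrite P0; lia.
have HD := Bdesc G ha ltac:(lia) Hpre Hmax Hf (tw a%:Z (~~ odd a) ltac:(lia) ltac:(lia)).
have P2a1 : P a.*2.+1 = 0.
  have := HD a (leqnn _) a (leqnn _).
  have -> : (a.+1 + a = a.*2.+1)%N by lia.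
  lia.
have ED0 : D P (a.*2.+1) = pw a 1 ++ [:: 0] ++ pw a (-1).
  have -> : (a.*2.+1 = a + (1 + a))%N by lia.
  rewrite D_cat D_cat.
  have E1 : D P a = pw a 1.
    apply: D_pw => i hi; rewrite (Hpre i.+1 hi) (Hpre i ltac:(lia)); lia.
  have E2 : D (fun i => P (a + i)%N) 1 = [:: 0].
    rewrite D1 addn0 addn1 (Hpre a (leqnn _)).
    have := HD a (leqnn _) 0%N ltac:(lia); rewrite addn0 => ->; congr [:: _]; lia.
  have E3 : D (fun i => P (a + (1 + i))%N) a = pw a (-1).
    apply: D_pw => i hi.
    have -> : (a + (1 + i.+1) = a.+1 + i.+1)%N by lia.
    have -> : (a + (1 + i) = a.+1 + i)%N by lia.
    rewrite (HD a (leqnn _) i.+1 hi) (HD a (leqnn _) i ltac:(lia)); lia.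
  by rewrite E1 E2 E3.
case: (ltnP a.*2.+2 k.*2) => hlt; last first.
  have eN : (k.*2 - 1 = a.*2.+1)%N by lia.
  rewrite eN ED0.
  left; split; first by rewrite hv eN P2a1.
  left; exists 0%N => /=.
  have -> : (k - 1 = a)%N by lia.
  by rewrite hv eN P2a1 -!catA.
have P2a2 : P a.*2.+2 = -1.
  have [s1 s2] := st a.*2.+1 hlt.
  rewrite P2a1 in s1 s2.
  have n1 : P a.*2.+2 <> 0.
    move=> e; exact: (NT 0%N a.*2.+1 a.*2.+2 ltac:(lia) ltac:(lia) hlt ltac:(lia) ltac:(lia)).
  have n2 : P a.*2.+2 <> 1.
    move=> e.
    have P2a : P a.*2 = 1.
      have := HD a (leqnn _) a.-1 ltac:(lia).
      have -> : (a.+1 + a.-1 = a.*2)%N by lia.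
      lia.
    have := F1' G (i := a.*2) (j := a.*2.+2) ltac:(lia) ltac:(lia) ltac:(lia) ltac:(lia).
    by rewrite oddSS; case: (odd _).
  lia.
pose L := (k - a - 1)%N.
pose Q := fun i => P (a.*2.+2 + i)%N + 1.
have eL : (a.*2.+2 + L.*2 = k.*2)%N by rewrite /L; lia.
have sh : forall i, odd (a.*2.+2 + i) = odd i by move=> i; rewrite oddD /= odd_double.
have [r [u [ru EDQ QE]]] : exists r u, [/\ (r + u = L - 1)%N,
   D Q (L.*2 - 1) = pairs r 0 (-1) ++ pw u (-1) ++ [:: 0] ++ pw u 1 &
   Q (L.*2 - 1)%N = - r%:Z].
  apply: subclaim.
  - rewrite /L; lia.
  - by rewrite /Q addn0 P2a2.
  - move=> j hj; have [s1 s2] := st (a.*2.+2 + j)%N ltac:(lia).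
    rewrite -addnS in s1 s2; rewrite /Q; lia.
  - move=> i hi; rewrite /Q.
    have lo := Hlow (a.*2.+2 + i)%N ltac:(lia).
    have up : P (a.*2.+2 + i)%N < 0.
      case: (ltrP (P (a.*2.+2 + i)%N) 0) => // hge.
      exfalso.
      pose v := absz (P (a.*2.+2 + i)%N).
      have ev : P (a.*2.+2 + i)%N = v%:Z by rewrite /v; lia.
      have va : (v <= a)%N by have := Hmax (a.*2.+2 + i)%N ltac:(lia); lia.
      have p1 := Hpre v va.
      have p2 := HD a (leqnn _) (a - v)%N ltac:(lia).
      exact: (NT v (a.+1 + (a - v))%N (a.*2.+2 + i)%N ltac:(lia) ltac:(lia) ltac:(lia) ltac:(lia) ltac:(lia)).
    rewrite /L; lia.
  - move=> i j hi hj nij; rewrite /Q => e.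
    have := F1' G (i := (a.*2.+2 + i)%N) (j := (a.*2.+2 + j)%N) ltac:(lia) ltac:(lia) ltac:(lia) ltac:(lia).
    by rewrite !sh.
  - move=> v b hv1 hv2.
    have [t [ht Pt ot]] := tw (v - 1) b ltac:(rewrite /L in hv1; lia) ltac:(lia).
    have gt : (a.*2.+2 <= t)%N.
      case: (leqP a.*2.+2 t) => // h1; exfalso.
      case: (leqP t a) => h2.
        have := Hpre t h2; lia.
      have := HD a (leqnn _) (t - a.+1)%N ltac:(lia).
      have -> : (a.+1 + (t - a.+1) = t)%N by lia.
      lia.
    exists (t - a.*2.+2)%N; split.
    + lia.
    + rewrite /Q; have -> : (a.*2.+2 + (t - a.*2.+2) = t)%N by lia.
      lia.
    + by rewrite -sh; have -> : (a.*2.+2 + (t - a.*2.+2) = t)%N by lia.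
have hr : h = r.+1%:Z.
  move: QE; rewrite /Q hv.
  have -> : (a.*2.+2 + (L.*2 - 1) = k.*2 - 1)%N by rewrite /L; lia.
  lia.
have ED : D P (k.*2 - 1) = pw a 1 ++ [:: 0] ++ pw a.+1 (-1) ++ D Q (L.*2 - 1).
  have -> : (k.*2 - 1 = a.*2.+2 + (L.*2 - 1))%N by rewrite /L; lia.
  rewrite D_cat.
  have -> : D (fun i => P (a.*2.+2 + i)%N) (L.*2 - 1) = D Q (L.*2 - 1) by rewrite /Q D_shift.
  have -> : (a.*2.+2 = a.*2.+1 + 1)%N by lia.
  rewrite D_cat ED0 D1 addn0 addn1 P2a1 P2a2.
  rewrite subr0 -!catA /=.
  by rewrite pw_snoc.
right; right; right.
split; first lia.
split; first by rewrite ED !mem_cat inE eqxx !orbT.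
split; first by rewrite ED mem_cat (mem_pw _ ha).
split; first by rewrite ED !mem_cat (mem_pw _ (isT : (0 < a.+1)%N)) !orbT.
exists r.+1, a; split; first by [].
split; first by rewrite /L in ru; lia.
split; first by rewrite /L in ru; lia.
have -> : (k - r.+1 - a - 1 = u)%N by rewrite /L in ru; lia.
rewrite ED EDQ hr subn1 /= -!catA /= -!catA /=.
done.
Qed.

Lemma core k P (h : int) : good k P -> 0 <= h -> h < k%:Z ->
  (exists c : int, h + P (k.*2 - 1)%N = c * (k.*2)%:Z) ->
  Concl k.*2 k (D P (k.*2 - 1) ++ [:: h]) h (D P (k.*2 - 1)).
Proof.
move=> G h0 hk hc.
have k3 := g_k G; have st := g_step G; have P0 := g_P0 G.
have [a0 [ha Ha]] := @argmax P k.*2 ltac:(lia).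
have [b0 [hb Hb]] := @argmin P k.*2 ltac:(lia).
case: (lerP k%:Z (P a0 - P b0)) => hW.
  exact: (caseA G h0 hk hc ha hb Ha Hb hW).
have W : P a0 - P b0 = k%:Z - 1.
  case: (lerP (k%:Z - 1) (P a0 - P b0)) => hW'; first lia.
  have [t [ht Pt _]] := g_surj G (v := P a0 + 1) true
    ltac:(move=> j hj; have := Ha j hj; have := Hb j hj; lia).
  have := Ha t ht; lia.
have tw : forall (v : int) (b : bool), P b0 <= v -> v <= P a0 ->
    exists t, [/\ (t < k.*2)%N, P t = v & odd t = b].
  move=> v b h1 h2; apply: (g_surj G) => j hj; have := Ha j hj; have := Hb j hj; lia.
have [Pe hv] : P (k.*2 - 1)%N <= 0 /\ h = - P (k.*2 - 1)%N.
  have r1 := Ha (k.*2 - 1)%N ltac:(lia).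
  have r2 := Hb (k.*2 - 1)%N ltac:(lia).
  have r3 := Ha 0%N ltac:(lia).
  have r4 := Hb 0%N ltac:(lia).
  case: hc => c hc.
  have := @cong0 (h + P (k.*2 - 1)%N) c (k.*2)%:Z ltac:(lia) hc.
  move=> H; have := H ltac:(lia) ltac:(lia); lia.
have [a [pa aa0 Hfirst]] := @first_idx (fun j => P j == P a0) a0 (eqxx _).
move/eqP: pa => pa.
have haN : (a < k.*2)%N by lia.
have Ha' : forall j, (j < k.*2)%N -> P j <= P a by move=> j hj; have := Ha j hj; lia.
have Hf : forall j, (j < a)%N -> P j <> P a.
  by move=> j hj E; have := Hfirst j hj; rewrite /= E pa eqxx.
have HB1 := B1 G haN Ha' Hf Pe.
have Hpre : forall i, (i <= a)%N -> P i = i%:Z by move=> i hi; exact: (HB1 a (leqnn _) i hi).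
have PA : P a = a%:Z := Hpre a (leqnn _).
case: a pa aa0 Hfirst haN Ha' Hf HB1 Hpre PA => [|a] pa aa0 Hfirst haN Ha' Hf HB1 Hpre PA.
  apply: (caseB_a0 G hv).
    move=> i hi; have := Ha i hi; have := Hb i hi; lia.
  move=> v b h1 h2; apply: tw; lia.
apply: (caseB_a1 G hv (a := a.+1)) => //.
- move=> j hj; have := Ha j hj; lia.
- by move=> j hj; rewrite -PA; exact: Hf.
- move=> j hj; have := Hb j hj; lia.
- move=> v b h1 h2; apply: tw; lia.
Qed.

Definition ee k s j : int := hdiff k.*2 s j - k%:Z.
Definition PP k s j : int := \sum_(i < j) ee k s i.

Lemma PPS k s j : PP k s j.+1 = PP k s j + ee k s j.
Proof. by rewrite /PP big_ord_recr. Qed.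

Lemma PP0 k s : PP k s 0 = 0.
Proof. by rewrite /PP big_ord0. Qed.

Lemma bigmin_ge m (F : nat -> nat) x c : (c <= \big[minn/x]_(j < m) F j)%N ->
  forall j, (j < m)%N -> (c <= F j)%N.
Proof.
move=> H j hj.
have : Ordinal hj \in index_enum 'I_m by rewrite mem_index_enum.
move: H; elim: (index_enum 'I_m) => [|i r IH] //.
rewrite big_cons inE leq_min => /andP[H1 H2] /orP[/eqP E|E].
  by rewrite -E in H1.
exact: IH.
Qed.

Lemma hdiff_range n s j : (0 < n)%N -> 0 <= hdiff n s j /\ hdiff n s j < n%:Z.
Proof.
move=> hn; rewrite /hdiff; split; first by apply: modz_ge0; lia.
by apply: ltz_pmod; lia.
Qed.

Lemma xrange n s j : latin_row n s -> (j < n)%N -> (1 <= nth 0%N s j <= n)%N.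
Proof.
move=> L hj.
have sz : size s = n by rewrite (perm_size L) size_iota.
have : nth 0%N s j \in iota 1 n by rewrite -(perm_mem L) mem_nth // sz.
by rewrite mem_iota; lia.
Qed.

Lemma cong_x k s : latin_row k.*2 s -> forall j, (j < k.*2)%N ->
  exists c : int, (nth 0%N s j)%:Z = (nth 0%N s 0)%:Z + j%:Z * k%:Z + PP k s j + c * (k.*2)%:Z.
Proof.
move=> L; elim => [|j IH] hj.
  by exists 0; rewrite PP0; lia.
have [c hc] := IH (ltnW hj).
set hd := hdiff k.*2 s j.
have Ehd : hd = (((nth 0%N s j.+1)%:Z - (nth 0%N s j)%:Z) %% (k.*2)%:Z)%Z.
  by rewrite /hd /hdiff modn_small.
have := divz_eq ((nth 0%N s j.+1)%:Z - (nth 0%N s j)%:Z) (k.*2)%:Z.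
rewrite -Ehd => Hq.
exists (c + (((nth 0%N s j.+1)%:Z - (nth 0%N s j)%:Z) %/ (k.*2)%:Z)%Z).
rewrite PPS /ee -/hd.
lia.
Qed.

Lemma nth_inj n s i j : latin_row n s -> (i < n)%N -> (j < n)%N -> nth 0%N s i = nth 0%N s j -> i = j.
Proof.
move=> L hi hj e.
have sz : size s = n by rewrite (perm_size L) size_iota.
have u : uniq s by rewrite (perm_uniq L) iota_uniq.
by apply/eqP; rewrite -(nth_uniq 0%N _ _ u) ?sz // e.
Qed.

Lemma step_arith (k : nat) (a b u w q1 q2 : int) : (3 <= k)%N ->
  0 <= u -> 0 <= w -> u < (k.*2)%:Z -> w < (k.*2)%:Z ->
  a - b = q1 * (k.*2)%:Z + u -> b - a = q2 * (k.*2)%:Z + w ->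
  (k - 1 <= absz u)%N -> (k - 1 <= absz w)%N ->
  -1 <= w - k%:Z /\ w - k%:Z <= 1.
Proof.
move=> k3 u0 w0 u1 w1 e1 e2 c1 c2.
have := @cong0 (u + w - (k.*2)%:Z) (- q1 - q2 - 1) (k.*2)%:Z ltac:(lia) ltac:(lia).
move=> H; have := H ltac:(lia) ltac:(lia).
lia.
Qed.

Lemma lin_help (i t k : nat) : (i + 2 * t)%N%:Z * k%:Z = i%:Z * k%:Z + t%:Z * (k.*2)%:Z.
Proof. nia. Qed.
Lemma lin_help2 (i t k : nat) : (i + (2 * t + 1))%N%:Z * k%:Z = i%:Z * k%:Z + t%:Z * (k.*2)%:Z + k%:Z.
Proof. nia. Qed.

Lemma F_arith (k : nat) (x0 xi xj Pi Pj ci cj A B tn : int) : (3 <= k)%N ->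
  1 <= xi -> xi <= (k.*2)%:Z -> 1 <= xj -> xj <= (k.*2)%:Z ->
  xi = x0 + A + Pi + ci * (k.*2)%:Z -> xj = x0 + (A + tn * (k.*2)%:Z + B) + Pj + cj * (k.*2)%:Z ->
  (Pj - Pi + B = 0 \/ Pj - Pi + B = (k.*2)%:Z \/ Pj - Pi + B = 0) -> xi = xj.
Proof.
move=> k3 a1 a2 b1 b2 ei ej H.
case: H => [H|[H|H]].
- apply/eqP; rewrite -subr_eq0; apply/eqP; apply: (@cong0 _ (ci - cj - tn) (k.*2)%:Z); lia.
- apply/eqP; rewrite -subr_eq0; apply/eqP; apply: (@cong0 _ (ci - cj - tn - 1) (k.*2)%:Z); lia.
- apply/eqP; rewrite -subr_eq0; apply/eqP; apply: (@cong0 _ (ci - cj - tn) (k.*2)%:Z); lia.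
Qed.

Lemma surj_arith (k : nat) (Pj v x0 xj c q r tn : int) (o b : bool) : (3 <= k)%N ->
  v - k%:Z < Pj -> Pj < v + k%:Z -> 0 <= r -> r < (k.*2)%:Z ->
  x0 + v + (b : nat)%:Z * k%:Z - 1 = q * (k.*2)%:Z + r -> xj = r + 1 ->
  xj = x0 + (tn * (k.*2)%:Z + (o : nat)%:Z * k%:Z) + Pj + c * (k.*2)%:Z ->
  o = b /\ Pj = v.
Proof.
move=> k3 l1 l2 r0 r1 ey ex hc.
case: o b hc ey => [] [] /= hc ey.
- split => //; apply/eqP; rewrite -subr_eq0; apply/eqP.
  apply: (@cong0 _ (- q - c - tn) (k.*2)%:Z); lia.
- exfalso; have := @cong0 (Pj - v + k%:Z - (k.*2)%:Z) (- q - c - tn - 1) (k.*2)%:Z; lia.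
- exfalso; have := @cong0 (Pj - v - k%:Z + (k.*2)%:Z) (- q - c - tn + 1) (k.*2)%:Z; lia.
- split => //; apply/eqP; rewrite -subr_eq0; apply/eqP.
  apply: (@cong0 _ (- q - c - tn) (k.*2)%:Z); lia.
Qed.

Lemma good_of k s : (3 <= k)%N -> latin_row k.*2 s -> inner_distance k.*2 s = (k - 1)%N ->
  good k (PP k s).
Proof.
move=> k3 L Hid.
have sz : size s = k.*2 by rewrite (perm_size L) size_iota.
have CX := cong_x L.
have XR := fun j => xrange (s := s) (j := j) L.
have NI := fun i j => nth_inj (i := i) (j := j) L.
constructor => //.
- exact: PP0.
- move=> j hj.
  have HH : (k - 1 <= \big[minn/k.*2]_(j < (k.*2).-1) cdist k.*2 (nth 0%N s j) (nth 0%N s j.+1))%N.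
    by move: Hid; rewrite /inner_distance => ->.
  have Hc := @bigmin_ge (k.*2).-1 (fun j => cdist k.*2 (nth 0%N s j) (nth 0%N s j.+1))
     k.*2 (k - 1)%N HH j ltac:(lia).
  move: Hc; rewrite /cdist leq_min => /andP[c1 c2].
  rewrite PPS /ee /hdiff modn_small //.
  have nz : (k.*2)%:Z != 0 by lia.
  have pz : 0 < (k.*2)%:Z by lia.
  have := @step_arith k (nth 0%N s j)%:Z (nth 0%N s j.+1)%:Z _ _ _ _ k3
    (modz_ge0 _ nz) (modz_ge0 _ nz) (ltz_pmod _ pz) (ltz_pmod _ pz)
    (divz_eq _ _) (divz_eq _ _) c1 c2.
  lia.
- move=> i j hij hj e; apply: contraT => Ho.
  have [ci hci] := CX i ltac:(lia).
  have [cj hcj] := CX j hj.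
  have [t ht] : exists t, (j = i + 2 * t)%N by exists ((j - i) %/ 2)%N; move: Ho; rewrite oddE; lia.
  have hjk : j%:Z * k%:Z = i%:Z * k%:Z + t%:Z * (k.*2)%:Z by rewrite ht lin_help.
  rewrite hjk in hcj.
  have ri := XR i ltac:(lia); have rj := XR j hj.
  have := @F_arith k (nth 0%N s 0)%:Z (nth 0%N s i)%:Z (nth 0%N s j)%:Z (PP k s i) (PP k s j) ci cj
     (i%:Z * k%:Z) 0 t%:Z k3 ltac:(lia) ltac:(lia) ltac:(lia) ltac:(lia) hci
     ltac:(rewrite addr0; exact: hcj) ltac:(left; rewrite e; lia).
  move/(congr1 absz) => /= E; have := NI i j ltac:(lia) hj E; lia.
- move=> i j hij hj Ho.
  have [ci hci] := CX i ltac:(lia).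
  have [cj hcj] := CX j hj.
  have [t ht] : exists t, (j = i + (2 * t + 1))%N by exists ((j - i) %/ 2)%N; move: Ho; rewrite oddE; lia.
  have hjk : j%:Z * k%:Z = i%:Z * k%:Z + t%:Z * (k.*2)%:Z + k%:Z by rewrite ht lin_help2.
  rewrite hjk in hcj.
  have ri := XR i ltac:(lia); have rj := XR j hj.
  split => E.
    have := @F_arith k (nth 0%N s 0)%:Z (nth 0%N s i)%:Z (nth 0%N s j)%:Z (PP k s i) (PP k s j) ci cj
      (i%:Z * k%:Z) k%:Z t%:Z k3 ltac:(lia) ltac:(lia) ltac:(lia) ltac:(lia) hci
      hcj ltac:(right; left; rewrite E; lia).
    move/(congr1 absz) => /= E'; have := NI i j ltac:(lia) hj E'; lia.
  have := @F_arith k (nth 0%N s 0)%:Z (nth 0%N s i)%:Z (nth 0%N s j)%:Z (PP k s i) (PP k s j) ci cj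
      (i%:Z * k%:Z) k%:Z t%:Z k3 ltac:(lia) ltac:(lia) ltac:(lia) ltac:(lia) hci
    hcj ltac:(right; right; rewrite E; lia).
  move/(congr1 absz) => /= E'; have := NI i j ltac:(lia) hj E'; lia.
- move=> v b Hv.
  set y0 := (nth 0%N s 0)%:Z + v + (b : nat)%:Z * k%:Z.
  have ey := divz_eq (y0 - 1) (k.*2)%:Z.
  move: (((y0 - 1) %/ (k.*2)%:Z)%Z) (((y0 - 1) %% (k.*2)%:Z)%Z)
     (modz_ge0 (y0 - 1) (ltac:(lia) : (k.*2)%:Z != 0)) (ltz_pmod (y0 - 1) (ltac:(lia) : 0 < (k.*2)%:Z)) ey
     => q r r0 r1 ey.
  have ym : absz (r + 1) \in s by rewrite (perm_mem L) mem_iota; lia.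
  set j := index (absz (r + 1)) s.
  have hj : (j < k.*2)%N by rewrite -sz index_mem.
  have ej : nth 0%N s j = absz (r + 1) by rewrite nth_index.
  have [c hc] := CX j hj.
  have [lo hi] := Hv j hj.
  have [t ht] : exists t, (j = 2 * t + odd j)%N by exists (j %/ 2)%N; rewrite oddE; case: eqP; lia.
  have hc' : (nth 0%N s j)%:Z = (nth 0%N s 0)%:Z + (t%:Z * (k.*2)%:Z + (odd j : nat)%:Z * k%:Z)
      + PP k s j + c * (k.*2)%:Z.
    rewrite hc; congr (_ + _ + _); rewrite {1}ht; nia.
  have [ob Pv] := @surj_arith k (PP k s j) v (nth 0%N s 0)%:Z (nth 0%N s j)%:Z c q r t%:Z (odd j) b k3 lo hi r0 r1 ey
     ltac:(rewrite ej; lia) hc'.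
  by exists j; split.
Qed.

Lemma nk_help (k : nat) : (1 <= k)%N -> (k.*2 - 1)%N%:Z * k%:Z + k%:Z = k%:Z * (k.*2)%:Z.
Proof. move=> h; nia. Qed.

Lemma ext_h_val k s : (3 <= k)%N -> ext_h k.*2 s = hdiff k.*2 s (k.*2 - 1) - k%:Z.
Proof.
move=> k3; rewrite /ext_h /ext_diff_row (nth_map 0%N) ?size_iota; last lia.
rewrite nth_iota ?doubleK ?subn1 //; lia.
Qed.

Lemma hcong k s : (3 <= k)%N -> latin_row k.*2 s ->
  (exists c : int, ext_h k.*2 s + PP k s (k.*2 - 1)%N = c * (k.*2)%:Z) /\ ext_h k.*2 s < k%:Z.
Proof.
move=> k3 L.
rewrite ext_h_val //.
have [c hc] := cong_x L (j := (k.*2 - 1)%N) ltac:(lia).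
have [r0 r1] := @hdiff_range k.*2 s (k.*2 - 1)%N ltac:(lia).
split; last lia.
move: r0 r1; rewrite /hdiff.
have -> : ((k.*2 - 1).+1 %% k.*2 = 0)%N.
  have -> : (k.*2 - 1).+1 = k.*2 by lia.
  by rewrite modnn.
move=> r0 r1.
have ey := divz_eq ((nth 0%N s 0)%:Z - (nth 0%N s (k.*2 - 1))%:Z) (k.*2)%:Z.
move: (((nth 0%N s 0)%:Z - (nth 0%N s (k.*2 - 1))%:Z) %/ (k.*2)%:Z)%Z ey => q ey.
have nk := nk_help (ltac:(lia) : (1 <= k)%N).
exists (- q - k%:Z - c).
lia.
Qed.

Lemma ediff k s : (3 <= k)%N ->
  ext_diff_row k.*2 s = D (PP k s) (k.*2 - 1) ++ [:: ext_h k.*2 s].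
Proof.
move=> k3.
rewrite ext_h_val // /ext_diff_row doubleK.
have -> : iota 0 k.*2 = iota 0 (k.*2 - 1) ++ iota (k.*2 - 1) 1.
  by rewrite -iotaD; congr iota; lia.
rewrite map_cat.
congr (_ ++ _).
rewrite /D /mkseq; apply: eq_map => i /=.
rewrite PPS /ee; lia.
Qed.

Lemma main_gen n k s : n = k.*2 -> (3 <= k)%N -> latin_row n s ->
  inner_distance n s = (k - 1)%N -> 0 <= ext_h n s ->
  Concl n k (ext_diff_row n s) (ext_h n s) (ext_eps n s).
Proof.
move=> -> k3 L Hid Hh.
have G := good_of k3 L Hid.
have [hc hk] := hcong k3 L.
rewrite /ext_eps ediff // take_size_cat ?size_mkseq //.
  exact: core G Hh hk hc.
by rewrite subn1.
Qed.

Theorem mainTheorem5 (n : nat) (s : seq nat) :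
  (6 <= n)%N -> ~~ odd n ->
  latin_row n s ->
  inner_distance n s = (n./2 - 1)%N ->
  0 <= ext_h n s ->
  let d := ext_diff_row n s in
  let h := ext_h n s in
  let eps := ext_eps n s in
  let k := n./2 in
  (* (0) *)
  (h = 0 /\
     (is_rotation_of d (pw (k - 1) 1 ++ [:: 0] ++ pw (k - 1) (-1) ++ [:: 0])
      \/ d = pw n 1 \/ d = pw n (-1)))
  (* (Type 1), first alternative *)
  \/ (0 < h /\ all (fun e => e \in [:: 0; -1]) eps /\
      h = (k - 1)%N%:Z /\ eps = pairs (k - 1) 0 (-1) ++ [:: 0])
  (* (Type 1), second alternative *)
  \/ (0 < h /\ all (fun e => e \in [:: 0; 1]) eps /\
      exists hn : nat, h = hn%:Z /\ (1 <= hn <= k - 1)%N /\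
        ((n %% 4 == 0)%N -> odd hn) /\ ((n %% 4 == 2)%N -> ~~ odd hn) /\
        d = pw (k - hn + 1) 1 ++ pairs (hn - 1) 0 1 ++ pw (k - hn) 1 ++ [:: hn%:Z])
  (* (Type 2) *)
  \/ (0 < h /\ 0 \in eps /\ 1 \in eps /\ -1 \in eps /\
      exists hn m : nat, h = hn%:Z /\ (1 <= hn <= k - 2)%N /\ (m <= k - 1 - hn)%N /\
        d = pw m 1 ++ [:: 0] ++ pw m.+1 (-1) ++ pairs (hn - 1) 0 (-1)
            ++ pw (k - hn - m - 1) (-1) ++ [:: 0] ++ pw (k - hn - m - 1) 1
            ++ [:: hn%:Z]).
Proof.
move=> H6 Hodd L Hid Hh.
have En : n = (n./2).*2.
  by rewrite -{1}(odd_double_half n) (negbTE Hodd) add0n.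
have k3 : (3 <= n./2)%N by move: H6; rewrite {1}En; lia.
exact: (main_gen En k3 L Hid Hh).
Qed.
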